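(* Let $\mathcal{N}$ be a two-level PT-net system with transitions partitioned into low-level $L$ and high-level $H$. For any high-level net system $\mathcal{N}'$ (with places disjoint from those of $\mathcal{N}$) whose set of transitions $H'$ does not intersect $L$, $\mathcal{N}\setminus H$ is weakly simulated by $(\mathcal{N}|\mathcal{N}')\setminus(H\setminus H')$, which in turn is weakly simulated by $\mathcal{N}$, where all these net systems have the same set of observable transitions $L$.
   Context: A PT-net is $N=(P,T,F)$ with $P,T$ finite disjoint and $F:(P\times T)\cup(T\times P)\to\mathbb{N}$; markings $M:P\to\mathbb{N}$; $t$ enabled at $M$ ($M[t\rangle$) iff $M(p)\ge F(p,t)$ for all $p$, firing gives $M'(p)=M(p)+F(t,p)-F(p,t)$. A PT-net system is $(N,M_0)$. $\mathcal{N}\setminus T'$ deletes the transitions of $T'$ (same places, same initial marking). For systems $\mathcal{N}_1,\mathcal{N}_2$ with disjoint place sets, $\mathcal{N}_1|\mathcal{N}_2$ has the union of places, the union of transitions (a shared transition is a single transition whose arcs to/from places of $\mathcal{N}_i$ are those of $\mathcal{N}_i$), and the union of initial markings. A high-level net system has only high-level transitions. Transitions in $L$ are observable, all others unobservable. A system $\mathcal{A}$ is weakly simulated by $\mathcal{B}$ if there is a relation $R$ between reachable markings of $\mathcal{A}$ and $\mathcal{B}$ containing the pair of initial markings such that for $(M_1,M_1')\in R$: if $M_1[l\rangle M_2$ with $l$ observable, then $M_1'$ reaches by a sequence of unobservable transitions, then $l$, then unobservable transitions, some $M_2'$ with $(M_2,M_2')\in R$; if $M_1[h\rangle M_2$ with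 $h$ unobservable, then $M_1'$ reaches by unobservable transitions some $M_2'$ with $(M_2,M_2')\in R$. *)

(* Defs.v *)
From mathcomp Require Import all_boot.
Set Implicit Arguments. Unset Strict Implicit. Unset Printing Implicit Defensive.

(* Transitions are drawn from a common universe [Tr] (an eqType), so that
   nets can share transitions under parallel composition.  A PT-net system
   has a finite type of places, a finite set (sequence) of transitions, the
   flow function F split into [pre] (F(p,t)) and [post] (F(t,p)), and an
   initial marking.  Only the values of [pre]/[post] on transitions of the
   net are relevant. *)
Record net (Tr : eqType) := Net {
  place : finType;
  trans : seq Tr;
  pre : place -> Tr -> nat;
  post : Tr -> place -> nat;
  m0 : place -> nat
}.

Section Nets.
Variable Tr : eqType.

Definition marking (N : net Tr) := place N -> nat.

Definition fire (N : net Tr) (M : marking N) (t : Tr) (M' : marking N) : Prop :=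
  t \in trans N /\ (forall p, pre p t <= M p) /\
  (forall p, M' p = M p + post t p - pre p t).

Inductive reach (N : net Tr) : marking N -> Prop :=
| reach0 : reach (@m0 _ N)
| reachS M t M' : reach M -> fire M t M' -> reach M'.

Inductive taus (N : net Tr) (obs : pred Tr) : marking N -> marking N -> Prop :=
| taus0 M : taus obs M M
| tausS M t M' M'' : ~~ obs t -> fire M t M' -> taus obs M' M'' -> taus obs M M''.

Definition restrict (N : net Tr) (D : pred Tr) : net Tr :=
  @Net Tr (place N) [seq t <- trans N | ~~ D t] (@pre _ N) (@post _ N) (@m0 _ N).

(* N1 | N2 : disjoint union of places (sum type), union of transitions,
   shared transitions merged; arcs to/from places of Ni are those of Ni. *)
Definition compose (N1 N2 : net Tr) : net Tr :=
  @Net Tr (place N1 + place N2)%type (trans N1 ++ trans N2)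
    (fun p t => match p with
                | inl p1 => if t \in trans N1 then pre p1 t else 0
                | inr p2 => if t \in trans N2 then pre p2 t else 0 end)
    (fun t p => match p with
                | inl p1 => if t \in trans N1 then post t p1 else 0
                | inr p2 => if t \in trans N2 then post t p2 else 0 end)
    (fun p => match p with inl p1 => m0 p1 | inr p2 => m0 p2 end).

Definition weakly_simulated (A B : net Tr) (obs : pred Tr) : Prop :=
  exists R : marking A -> marking B -> Prop,
    (forall M M', R M M' -> reach M /\ reach M') /\
    R (@m0 _ A) (@m0 _ B) /\
    forall M1 M1', R M1 M1' ->
      (forall l M2, obs l -> fire M1 l M2 ->
         exists M2', (exists X Y, taus obs M1' X /\ fire X l Y /\ taus obs Y M2')
                     /\ R M2 M2') /\
      (forall h M2, ~~ obs h -> fire M1 h M2 ->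
         exists M2', taus obs M1' M2' /\ R M2 M2').

(* Two-level nets: [lowp] is the global classification of transitions as
   low-level; the transitions of N split into L (low) and H (high). *)
Definition Lset (lowp : pred Tr) (N : net Tr) : pred Tr :=
  [pred t | (t \in trans N) && lowp t].
Definition Hset (lowp : pred Tr) (N : net Tr) : pred Tr :=
  [pred t | (t \in trans N) && ~~ lowp t].

End Nets.

(* Main.v *)
Require Import Defs.
From mathcomp Require Import all_boot.

Theorem proposition2 (Tr : eqType) (lowp : pred Tr) (N N' : net Tr)
  (high_N' : forall t, t \in trans N' -> ~~ lowp t)
  (disj : forall t, t \in trans N' -> ~~ Lset lowp N t) :
  let L := Lset lowp N in
  let H := Hset lowp N in
  let HmH' := [pred t | H t && (t \notin trans N')] in
  weakly_simulated (restrict N H) (restrict (compose N N') HmH') L /\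
  weakly_simulated (restrict (compose N N') HmH') N L.
Proof.
move=> L H HmH'.
have notN' : forall l, L l -> l \notin trans N'.
  by move=> l ol; apply/negP=> h; move: (disj _ h); rewrite /L in ol; rewrite ol.
split.
- exists (fun (M : marking (restrict N H)) (M' : marking (restrict (compose N N') HmH')) =>
    reach M /\ reach M' /\ forall x, M' x = match x with inl p => M p | inr q => m0 q end).
  split; first by move=> M M' [? [? _]].
  split; first by split; [constructor|split; [constructor|by case]].
  move=> M1 M1' [r1 [r1' e1]]; split.
  + move=> l M2 ol [tl [pl el]].
    have lN' := notN' _ ol.
    have /andP[lN lowl] : (l \in trans N) && lowp l by exact: ol.
    pose M2' := fun x : place N + place N' => match x with inl p => M2 p | inr q => m0 q end.
    have fr : fire M1' l M2'.
      split; first by rewrite /= mem_filter mem_cat lN /H /Hset !inE lN lowl.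
      split.
        case=> [p|q] /=; rewrite ?lN ?(negbTE lN') // e1; exact: pl.
      case=> [p|q] /=; rewrite ?lN ?(negbTE lN') e1 ?el ?addn0 ?subn0 //.
    exists M2'; split.
      exists M1', M2'; split; [constructor|split; [exact fr|constructor]].
    split; first by apply: (reachS r1); exact (conj tl (conj pl el)).
    split; first exact: (reachS r1' fr).
    by [].
  + move=> h M2 oh [th _]; exfalso.
    move: th; rewrite /= mem_filter /H /Hset !inE => /andP[hh hN].
    move: oh; rewrite /L /Lset !inE hN /=; move: hh; rewrite hN /=; by case: (lowp h).
- exists (fun (M' : marking (restrict (compose N N') HmH')) (M : marking N) =>
    reach M' /\ reach M /\ forall p, M' (inl p) = M p).
  split; first by move=> M M' [? [? _]].
  split; first by split; [constructor|split; [constructor|by []]].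
  move=> M1' M1 [r1' [r1 e1]]; split.
  + move=> l M2' ol fr.
    have lN' := notN' _ ol.
    have /andP[lN lowl] : (l \in trans N) && lowp l by exact: ol.
    case: (fr) => [tl [pl el]].
    pose M2 := fun p : place N => M2' (inl p).
    have fr2 : fire M1 l M2.
      split; first exact: lN.
      split.
        move=> p; rewrite -e1; move: (pl (inl p)); by rewrite /= lN.
      move=> p; rewrite /M2 el /= lN e1 //.
    exists M2; split.
      exists M1, M2; split; [constructor|split; [exact fr2|constructor]].
    split; first exact: (reachS r1' fr).
    split; first exact: (reachS r1 fr2).
    by [].
  + move=> h M2' oh fr.
    case: (fr) => [th [ph eh]].
    have r2' := reachS r1' fr.
    case hN: (h \in trans N).
    * pose M2 := fun p : place N => M2' (inl p).
      have fr2 : fire M1 h M2.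
        split; first exact: hN.
        split.
          move=> p; rewrite -e1; move: (ph (inl p)); by rewrite /= hN.
        move=> p; rewrite /M2 eh /= hN e1 //.
      exists M2; split; first exact: (tausS oh fr2 (taus0 _ _)).
      split; first exact: r2'.
      split; first exact: (reachS r1 fr2).
      by [].
    * exists M1; split; first exact: taus0.
      split; first exact: r2'.
      split; first exact: r1.
      move=> p; rewrite eh /= hN addn0 subn0; exact: e1.
Qed.
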